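(* If $G$ is a traceable graph (i.e. $G$ has a Hamilton path) of order $n\geq 3$, then $px_k(G)=2$ for each integer $k$ with $3\leq k\leq n$.
   Context: All graphs are finite, simple, undirected and connected. An edge-coloring of a graph assigns a color to each edge (adjacent edges may receive the same color). A tree in an edge-colored graph is proper if any two adjacent edges of the tree receive different colors. For $S\subseteq V(G)$, an $S$-tree is a subgraph of $G$ that is a tree containing all vertices of $S$. For a connected graph $G$ of order $n$ and an integer $k$ with $2\le k\le n$, an edge-coloring of $G$ is a $k$-proper coloring if for every set $S$ of $k$ vertices of $G$ there exists a proper $S$-tree in $G$. The $k$-proper index $px_k(G)$ is the minimum number of colors used in a $k$-proper coloring of $G$. *)

(* Defs.v *)
From mathcomp Require Import all_boot.
Set Implicit Arguments. Unset Strict Implicit. Unset Printing Implicit Defensive.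

(* A simple graph on a finite vertex type T is a symmetric irreflexive
   relation e : rel T.  An edge is the 2-element set [set x; y] with e x y. *)
Section Graphs.
Variable T : finType.

Definition edges (e : rel T) : {set {set T}} :=
  [set E : {set T} | [exists x, exists y, e x y && (E == [set x; y])]].

(* An edge-coloring assigns a natural number (a color) to each edge;
   values on non-edges are irrelevant. *)
Definition coloring := {set T} -> nat.

Definition ncolors (e : rel T) (c : coloring) : nat :=
  size (undup [seq c E | E <- enum (edges e)]).

Definition adjF (F : {set {set T}}) : rel T :=
  fun u v => (u != v) && ([set u; v] \in F).

(* (A, F) is a subgraph of G that is a tree:
   - every edge of F is an edge of G with both endpoints in A,
   - A is nonempty and connected using edges of F,
   - F is acyclic: no edge {x,y} of F lies on a cycle, i.e. x and y are not
     connected in F minus that edge. *)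
Definition is_subtree (e : rel T) (A : {set T}) (F : {set {set T}}) : Prop :=
  [/\ F \subset edges e,
      forall E, E \in F -> E \subset A,
      A != set0,
      forall x y, x \in A -> y \in A -> connect (adjF F) x y
    & forall x y, x != y -> [set x; y] \in F ->
        ~~ connect (adjF (F :\ [set x; y])) x y].

Definition proper_edges (c : coloring) (F : {set {set T}}) : Prop :=
  forall E1 E2, E1 \in F -> E2 \in F -> E1 != E2 ->
    E1 :&: E2 != set0 -> c E1 != c E2.

Definition k_proper_coloring (e : rel T) (k : nat) (c : coloring) : Prop :=
  forall S : {set T}, #|S| = k ->
    exists (A : {set T}) (F : {set {set T}}),
      [/\ is_subtree e A F, S \subset A & proper_edges c F].

Definition is_proper_index (e : rel T) (k m : nat) : Prop :=
  (exists c, k_proper_coloring e k c /\ ncolors e c = m) /\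
  (forall c, k_proper_coloring e k c -> m <= ncolors e c).

Definition traceable (e : rel T) : Prop :=
  exists (x : T) (p : seq T), [/\ path e x p, uniq (x :: p) & size (x :: p) = #|T|].

Definition connected_graph (e : rel T) : Prop := forall x y : T, connect e x y.
End Graphs.

(* Main.v *)
Require Import Defs.
From mathcomp Require Import all_boot.
From mathcomp Require Import zify.

Set Implicit Arguments. Unset Strict Implicit. Unset Printing Implicit Defensive.

Section Up.
Variables (T : finType) (e : rel T) (x : T) (p : seq T).
Hypotheses (hpath : path e x p) (huniq : uniq (x :: p)) (hsize : size (x :: p) = #|T|).

Definition fi (v : T) := index v (x :: p).
Definition gi (i : nat) := nth x (x :: p) i.
Definition nn := size (x :: p).

Lemma mem_s v : v \in x :: p.
Proof.
have /subset_cardP : #|x :: p| = #|T|.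
  by rewrite -hsize (card_uniqP huniq).
by move=> /(_ (subset_predT _)) ->.
Qed.

Lemma fi_lt v : fi v < nn.
Proof. by rewrite /fi /nn index_mem mem_s. Qed.

Lemma gf v : gi (fi v) = v.
Proof. by rewrite /gi /fi nth_index // mem_s. Qed.

Lemma fg i : i < nn -> fi (gi i) = i.
Proof. by move=> hi; rewrite /fi /gi index_uniq. Qed.

Lemma fi_inj : injective fi.
Proof. by move=> a b h; rewrite -(gf a) -(gf b) h. Qed.

Lemma e_step i : i.+1 < nn -> e (gi i) (gi i.+1).
Proof.
move=> hi; move/pathP: hpath => /(_ x i); rewrite /gi /=; apply.
by move: hi; rewrite /nn /=.
Qed.

Definition succ u := gi (fi u).+1.
Definition ok u := (fi u).+1 < nn.
Definition edge u := [set u; succ u].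
Definition FF : {set {set T}} := [set E | [exists u, ok u && (E == edge u)]].
Definition cc : coloring T :=
  fun E => if [exists u, [&& ok u, E == edge u & odd (fi u)]] then 2 else 1.

Lemma fi_succ u : ok u -> fi (succ u) = (fi u).+1.
Proof. by move=> h; rewrite /succ fg. Qed.

Lemma mem_edge z u : ok u -> z \in edge u -> fi z = fi u \/ fi z = (fi u).+1.
Proof.
move=> h; rewrite in_set2 => /orP[/eqP->|/eqP->]; first by left.
by right; rewrite fi_succ.
Qed.

Lemma edge_inj u w : ok u -> ok w -> edge u = edge w -> u = w.
Proof.
move=> ou ow H.
have := set21 u (succ u); rewrite -/(edge u) H => /(mem_edge ow) hu.
have := set21 w (succ w); rewrite -/(edge w) -H => /(mem_edge ou) hw.
apply: fi_inj; lia.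
Qed.

Lemma c_edge u : ok u -> cc (edge u) = if odd (fi u) then 2 else 1.
Proof.
move=> ou; rewrite /cc; case: existsP => [[w /and3P[ow /eqP ew od]]|nex].
  by rewrite (edge_inj ou ow ew) od.
case: ifP => // od; exfalso; apply: nex; exists u; by rewrite ou eqxx od.
Qed.

Lemma edge_in u : ok u -> edge u \in edges e.
Proof.
move=> ou; rewrite inE; apply/existsP; exists u; apply/existsP; exists (succ u).
rewrite eqxx andbT /succ -{1}(gf u); exact: e_step.
Qed.

Lemma adjF_sym (F : {set {set T}}) : symmetric (adjF F).
Proof. by move=> a b; rewrite /adjF eq_sym setUC. Qed.

Lemma conn_x i : i < nn -> connect (adjF FF) x (gi i).
Proof.
elim: i => [|i IH] hi; first by [].
apply: connect_trans (IH (ltnW hi)) (connect1 _).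
rewrite /adjF; apply/andP; split.
  apply/negP => /eqP /(f_equal fi); rewrite !fg //; [lia | exact: ltnW].
rewrite inE; apply/existsP; exists (gi i).
by rewrite /ok /edge /succ fg ?hi ?eqxx // ltnW.
Qed.

Lemma FF_sub : FF \subset edges e.
Proof.
apply/subsetP => E; rewrite inE => /existsP[u /andP[ou /eqP->]]; exact: edge_in.
Qed.

Lemma subtree_FF : is_subtree e setT FF.
Proof.
split.
- exact: FF_sub.
- by move=> E _; apply: subsetT.
- by apply/set0Pn; exists x; rewrite inE.
- move=> a b _ _.
  have ha : connect (adjF FF) x a by rewrite -(gf a); apply: conn_x; apply: fi_lt.
  have hb : connect (adjF FF) x b by rewrite -(gf b); apply: conn_x; apply: fi_lt.
  rewrite (sym_connect_sym (@adjF_sym FF)) in ha.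
  exact: connect_trans ha hb.
- move=> a b ab; rewrite inE => /existsP[u /andP[ou /eqP Hab]].
  have fab : fi a != fi b by apply: contra ab => /eqP /fi_inj ->.
  have ha : a \in edge u by rewrite -Hab set21.
  have hb : b \in edge u by rewrite -Hab set22.
  move: (mem_edge ou ha) (mem_edge ou hb) => ha' hb'.
  apply/negP => hc.
  have Hcl : closed (adjF (FF :\ [set a; b])) [pred v | fi v <= fi u].
    move=> v w /andP[vw]; rewrite in_setD1 => /andP[ne]; rewrite inE.
    move=> /existsP[z /andP[oz /eqP Hz]].
    have fvw : fi v != fi w by apply: contra vw => /eqP /fi_inj ->.
    have hv : v \in edge z by rewrite -Hz set21.
    have hw : w \in edge z by rewrite -Hz set22.
    move: (mem_edge oz hv) (mem_edge oz hw) => hv' hw'.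
    have zu : fi z != fi u.
      apply: contra ne => /eqP /fi_inj zu; by rewrite Hz zu Hab.
    rewrite !inE /=; move: fvw.
    case: hv' => ->; case: hw' => ->; rewrite ?eqxx // => _.
      by rewrite ltn_neqAle zu.
    by rewrite ltn_neqAle zu.
  have := closed_connect Hcl hc; rewrite !inE /=.
  move: fab; case: ha' => ->; case: hb' => ->; rewrite ?eqxx // => _.
    by rewrite leqnn ltnn.
  by rewrite leqnn ltnn.
Qed.

Lemma proper_FF : proper_edges cc FF.
Proof.
move=> E1 E2; rewrite !inE => /existsP[u /andP[ou /eqP->]] /existsP[w /andP[ow /eqP->]].
move=> ne /set0Pn[z]; rewrite inE => /andP[zu zw].
have uw : fi u != fi w by apply: contra ne => /eqP /fi_inj ->.
move: (mem_edge ou zu) (mem_edge ow zw) => hu hw.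
rewrite !c_edge //.
have : fi u = (fi w).+1 \/ fi w = (fi u).+1 by lia.
by case => ->; rewrite /=; case: (odd _).
Qed.

Lemma ncolors_cc : 3 <= nn -> ncolors e cc = 2.
Proof.
move=> h3.
have o0 : ok x by rewrite /ok -[x]/(gi 0) fg //; lia.
have o1 : ok (gi 1) by rewrite /ok fg //; lia.
rewrite /ncolors.
have H : undup [seq cc E | E <- enum (edges e)] =i [:: 1; 2].
  move=> z; rewrite mem_undup; apply/idP/idP.
    move=> /mapP[E _ ->]; rewrite /cc; by case: ifP.
  rewrite !inE => /orP[] /eqP ->; apply/mapP.
    exists (edge x); first by rewrite mem_enum edge_in.
    by rewrite c_edge // -[x]/(gi 0) fg //; lia.
  exists (edge (gi 1)); first by rewrite mem_enum edge_in.
  by rewrite c_edge // fg //; lia.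
by rewrite (perm_size (uniq_perm (undup_uniq _) (isT : uniq [:: 1; 2]) H)).
Qed.

End Up.

Lemma exit_lemma (T : finType) (r : rel T) (P : {pred T}) a b :
  connect r a b -> a \in P -> b \notin P ->
  exists v w, [/\ r v w, v \in P & w \notin P].
Proof.
move=> /connectP[q]; elim: q a => [|z q IH] a /=.
  by move=> _ ->; move=> ->.
move=> /andP[raz pq] hb aP bP.
case: (boolP (z \in P)) => zP.
  exact: IH pq hb zP bP.
by exists a, z.
Qed.

Lemma pick_out (T : finType) (S B : {set T}) : #|B| < #|S| ->
  exists z, z \in S /\ z \notin B.
Proof.
move=> h; case: (boolP (S \subset B)) => [/subset_leq_card|/subsetPn[z zS zB]].
  by rewrite leqNgt h.
by exists z.
Qed.

Theorem mainTheorem4 (T : finType) (e : rel T)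
  (e_sym : symmetric e) (e_irr : irreflexive e)
  (e_conn : connected_graph e)
  (n_ge3 : 3 <= #|T|) (Htr : traceable e) (k : nat)
  (hk : 3 <= k <= #|T|) :
  is_proper_index e k 2.
Proof.
case/andP: hk => hk1 hk2.
split.
  case: Htr => x [p [hp hu hs]].
  exists (cc x p); split; last by apply: ncolors_cc => //; rewrite /nn hs.
  move=> S _; exists setT, (FF x p); split.
  - exact: subtree_FF.
  - exact: subsetT.
  - exact: (proper_FF hp hu hs).
move=> c Hc.
have [q [uq sq _]] : exists q : seq T, [/\ uniq q, size q = k & {subset q <= T}].
  by apply/card_geqP.
have cS : #|[set v in q]| = k.
  by rewrite -sq -(card_uniqP uq); apply: eq_card => v; rewrite inE.
have [A [F [[Fsub _ _ Acon _] SA prop]]] := Hc _ cS.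
have [a [aS _]] : exists a, a \in [set v in q] /\ a \notin set0.
  by apply: pick_out; rewrite cards0 cS; lia.
have [b [bS ba]] : exists b, b \in [set v in q] /\ b \notin [set a].
  by apply: pick_out; rewrite cards1 cS; lia.
have aA := subsetP SA _ aS; have bA := subsetP SA _ bS.
have ba' : b \notin pred1 a by move: ba; rewrite inE.
have [v [w [vw /= va wa]]] := exit_lemma (P := pred1 a) (Acon _ _ aA bA) (eqxx a) ba'.
move/eqP: va => va; subst v.
have [z [zS zB]] : exists z, z \in [set v in q] /\ z \notin [set a; w].
  by apply: pick_out; rewrite cS cards2; case: (a != w); lia.
have zA := subsetP SA _ zS.
have [v' [w' [vw' va' wa']]] := exit_lemma (P := mem [set a; w]) (Acon _ _ aA zA) (set21 a w) zB.
case/andP: vw => _ E1F; case/andP: vw' => _ E2F.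
have ne : [set a; w] != [set v'; w'].
  apply/negP => /eqP H; move: wa'; by rewrite H set22.
have nz : [set a; w] :&: [set v'; w'] != set0.
  apply/set0Pn; exists v'; by rewrite inE va' set21.
have hc := prop _ _ E1F E2F ne nz.
rewrite /ncolors.
have -> : 2 = size [:: c [set a; w]; c [set v'; w']] by [].
apply: uniq_leq_size; first by rewrite /= inE hc.
move=> y; rewrite !inE mem_undup => /orP[] /eqP ->; apply: map_f;
  rewrite mem_enum; apply: (subsetP Fsub) => //.
Qed.
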